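(* Let $(\mathcal A,\cdot,\ast,D)$ be a special GDN-Poisson admissible algebra and define $x\circ y:=x\ast Dy$ for $x,y\in\mathcal A$. Then $(\mathcal A,\cdot,\circ)$ is a GDN-Poisson algebra.
   Context: A special GDN-Poisson admissible algebra $(\mathcal A,\cdot,\ast,D)$ is a vector space with bilinear products $\cdot,\ast$ and a linear map $D$ such that $(\mathcal A,\cdot)$ is commutative associative with unit $e$, $(\mathcal A,\ast)$ is commutative associative, and $(x\cdot y)\ast z=x\cdot(y\ast z)$, $D(x\ast y)=(Dx)\ast y+x\ast(Dy)$, $D(x\cdot y)=(Dx)\cdot y+x\cdot(Dy)-x\cdot y\cdot(De)$. A GDN-Poisson algebra is a vector space with bilinear products $\cdot,\circ$ such that $(\mathcal A,\cdot)$ is commutative associative with unit $e$, $x\circ(y\circ z)-(x\circ y)\circ z=y\circ(x\circ z)-(y\circ x)\circ z$, $(x\circ y)\circ z=(x\circ z)\circ y$, $(x\cdot y)\circ z=x\cdot(y\circ z)$, and $(x\circ y)\cdot z-x\circ(y\cdot z)=(y\circ x)\cdot z-y\circ(x\cdot z)$. *)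

(* Defs.v *)
From mathcomp Require Import all_boot all_algebra.
Set Implicit Arguments. Unset Strict Implicit. Unset Printing Implicit Defensive.
Import GRing.Theory.
Local Open Scope ring_scope.

Definition bilinear_op (K : fieldType) (V : lmodType K) (m : V -> V -> V) : Prop :=
  (forall a x y z, m (a *: x + y) z = a *: m x z + m y z) /\
  (forall a x y z, m x (a *: y + z) = a *: m x y + m x z).

Definition linear_map (K : fieldType) (V : lmodType K) (f : V -> V) : Prop :=
  forall a x y, f (a *: x + y) = a *: f x + f y.

Definition com_assoc (K : fieldType) (V : lmodType K) (m : V -> V -> V) : Prop :=
  (forall x y, m x y = m y x) /\ (forall x y z, m (m x y) z = m x (m y z)).

Definition has_unit (K : fieldType) (V : lmodType K) (m : V -> V -> V) (e : V) : Prop :=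
  forall x, m e x = x /\ m x e = x.

Definition special_GDN_Poisson_admissible (K : fieldType) (V : lmodType K)
  (dot ast : V -> V -> V) (D : V -> V) (e : V) : Prop :=
  bilinear_op dot /\ bilinear_op ast /\ linear_map D /\
      com_assoc dot /\ has_unit dot e /\
      com_assoc ast /\
      (forall x y z, ast (dot x y) z = dot x (ast y z)) /\
      (forall x y, D (ast x y) = ast (D x) y + ast x (D y)) /\
      (forall x y, D (dot x y) = dot (D x) y + dot x (D y) - dot (dot x y) (D e)).

Definition GDN_Poisson (K : fieldType) (V : lmodType K)
  (dot circ : V -> V -> V) (e : V) : Prop :=
  bilinear_op dot /\ bilinear_op circ /\
      com_assoc dot /\ has_unit dot e /\
      (forall x y z, circ x (circ y z) - circ (circ x y) z
                     = circ y (circ x z) - circ (circ y x) z) /\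
      (forall x y z, circ (circ x y) z = circ (circ x z) y) /\
      (forall x y z, circ (dot x y) z = dot x (circ y z)) /\
      (forall x y z, dot (circ x y) z - circ x (dot y z)
                     = dot (circ y x) z - circ y (dot x z)).

(* Main.v *)
Require Import Defs.
From mathcomp Require Import all_boot all_algebra.
Import GRing.Theory.
Local Open Scope ring_scope.

Section H.
Variables (K : fieldType) (V : lmodType K) (m : V -> V -> V).
Hypothesis hm : bilinear_op m.
Lemma mD2 x u v : m x (u + v) = m x u + m x v.
Proof. by have := (proj2 hm) 1 x u v; rewrite !scale1r => ->. Qed.
Lemma m02 x : m x 0 = 0.
Proof.
have h := mD2 x 0 0. rewrite addr0 in h.
by apply: (addrI (m x 0)); rewrite addr0 -h.
Qed.
Lemma mN2 x u : m x (- u) = - m x u.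
Proof. by have := (proj2 hm) (-1) x u 0; rewrite addr0 m02 addr0 !scaleN1r => ->. Qed.
Lemma mB2 x u v : m x (u - v) = m x u - m x v.
Proof. by rewrite mD2 mN2. Qed.
End H.

Lemma zl (V : zmodType) (a A B c : V) : a - (a + A - B) = B - A.
Proof. by rewrite !opprD opprK !addrA subrr add0r addrC. Qed.

Theorem mainTheorem3 (K : fieldType) (V : lmodType K)
  (dot ast : V -> V -> V) (D : V -> V) (e : V) :
  special_GDN_Poisson_admissible dot ast D e ->
  GDN_Poisson dot (fun x y => ast x (D y)) e.
Proof.
move=> [bd [ba [lD [[dC dA] [he [[aC aA] [mx [Da Dd]]]]]]]].
have DD : forall u v, D (u + v) = D u + D v.
  by move=> u v; have := lD 1 u v; rewrite !scale1r => ->.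
have L : forall a b c, ast a (dot b c) = dot b (ast a c).
  by move=> a b c; rewrite aC mx aC.
have P : forall a b c, dot (ast a b) c = ast a (dot b c).
  move=> a b c; rewrite L dC -mx (dC c a) mx -(mx b a c) (dC b a) mx (aC b c).
  by [].
have S : forall x y w, ast x (dot y w) = ast y (dot x w).
  by move=> x y w; rewrite !L -!mx dC.
have Sa : forall x y w, ast x (ast y w) = ast y (ast x w).
  by move=> x y w; rewrite -!aA (aC x y).
split; first exact bd.
split.
  split=> a x y z.
    by rewrite (proj1 ba).
  by rewrite lD (proj2 ba).
split; first by [].
split; first exact he.
split.
  move=> x y z; rewrite !Da !(@mD2 _ _ _ ba) !aA.
  by rewrite (addrC (ast x _)) (addrC (ast y _)) !addrK Sa.
split.
  by move=> x y z; rewrite !aA aC (aC (D z)).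
split.
  by move=> x y z; rewrite mx.
move=> x y z.
rewrite !Dd !(@mB2 _ _ _ ba) !(@mD2 _ _ _ ba) !P !zl //.
by rewrite !dA (S x y (dot z (D e))) (S x y (D z)).
Qed.
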